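(* For every graph $G$ and every independent set $I$ in $G$ we have $\mu_\alpha(G-N[I])\leq\mu_\alpha(G)$.
   Context: All graphs are finite and simple; the null graph is allowed. $N[I]$ is the closed neighborhood of $I$ (the vertices of $I$ together with all their neighbors), and $G-N[I]$ is obtained by deleting these vertices. For a graph $H$, $\alpha(H)$ is the maximum size of an independent set, $i(H)$ the minimum size of an inclusion-maximal independent set (both $0$ for the null graph), and $\mu_\alpha(H)=\alpha(H)-i(H)$. *)

(* Defs.v *)
From mathcomp Require Import all_boot all_order all_algebra.
Set Implicit Arguments. Unset Strict Implicit. Unset Printing Implicit Defensive.

(* A finite simple graph: vertex type T (finType), adjacency relation e,
   assumed symmetric and irreflexive (hypotheses in the theorem).
   Induced subgraphs are represented by their vertex set S : {set T}. *)

Section Graphs.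
Variables (T : finType) (e : rel T).

Definition independent (I : {set T}) : bool :=
  [forall x in I, forall y in I, ~~ e x y].

Definition indep_in (S I : {set T}) : bool := (I \subset S) && independent I.

Definition maximal_indep_in (S I : {set T}) : bool :=
  indep_in S I && [forall J : {set T}, (I \proper J) ==> ~~ indep_in S J].

Definition alpha_in (S : {set T}) : nat :=
  \max_(I : {set T} | indep_in S I) #|I|.

(* i(G[S]) : minimum size of an inclusion-maximal independent set
   (the set of candidates is nonempty; the bound #|T| is never attained
   except trivially, and gives 0 for the null graph since set0 is then
   the unique maximal independent set). *)
Definition imin_in (S : {set T}) : nat :=
  \big[minn/#|T|]_(I : {set T} | maximal_indep_in S I) #|I|.

Definition mu_alpha_in (S : {set T}) : int :=
  ((alpha_in S)%:Z - (imin_in S)%:Z)%R.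

Definition closed_nbhd (I : {set T}) : {set T} :=
  I :|: [set y | [exists x in I, e x y]].

End Graphs.

(* Main.v *)
Require Import Defs.
From mathcomp Require Import all_boot all_order all_algebra.
From mathcomp Require Import zify.
Import Order.TTheory GRing.Theory Num.Theory.

Section Helpers.
Local Open Scope nat_scope.
Variables (T : finType) (e : rel T).
Hypotheses (e_sym : symmetric e) (e_irr : irreflexive e).
Variables (I : {set T}) (hI : independent e I).

Let S := ~: closed_nbhd e I.

Lemma indep_sub (A B : {set T}) : A \subset B -> independent e B -> independent e A.
Proof.
move=> sAB /forall_inP iB; apply/forall_inP => x xA; apply/forall_inP => y yA.
exact: (forall_inP (iB x (subsetP sAB x xA)) y (subsetP sAB y yA)).
Qed.

Lemma notS {x y : T} : y \in I -> e y x -> x \notin S.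
Proof.
move=> yI exy; rewrite /S in_setC negbK /closed_nbhd in_setU; apply/orP; right.
by rewrite inE; apply/exists_inP; exists y.
Qed.

Lemma indepU (B : {set T}) : B \subset S -> independent e B -> independent e (B :|: I).
Proof.
move=> sBS /forall_inP iB; apply/forall_inP => x; rewrite in_setU => /orP [xB|xI];
apply/forall_inP => y; rewrite in_setU => /orP [yB|yI].
- exact: (forall_inP (iB x xB) y yB).
- apply/negP => exy; have := subsetP sBS x xB; rewrite e_sym in exy.
  by rewrite (negbTE (notS yI exy)).
- apply/negP => exy; have := subsetP sBS y yB.
  by rewrite (negbTE (notS xI exy)).
- exact: (forall_inP (forall_inP hI x xI) y yI).
Qed.

Lemma disjBI (B : {set T}) : B \subset S -> #|B :|: I| = #|B| + #|I|.
Proof.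
move=> sBS; rewrite cardsU; suff -> : B :&: I = set0 by rewrite cards0 subn0.
apply/setP => x; rewrite !inE; apply/negP => /andP [xB xI].
have := subsetP sBS x xB; rewrite /S in_setC /closed_nbhd in_setU xI.
by [].
Qed.

Lemma bigminn_le (J : finType) (P : pred J) (F : J -> nat) x j :
  P j -> \big[minn/x]_(i | P i) F i <= F j.
Proof.
move=> Pj; have : j \in index_enum J by rewrite mem_index_enum.
elim: (index_enum J) => [|a s IH] //=; rewrite big_cons in_cons => /orP [/eqP <-|js].
- by rewrite Pj geq_minl.
- case: (P a); last exact: IH.
  by rewrite geq_min IH ?orbT.
Qed.

Lemma alpha_ineq : alpha_in e S + #|I| <= alpha_in e [set: T].
Proof.
rewrite /alpha_in.
apply: (big_ind (fun x => x + #|I| <= \max_(J : {set T} | indep_in e [set: T] J) #|J|)).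
- rewrite add0n; apply: (@leq_bigmax_cond _ (fun J : {set T} => indep_in e [set: T] J) (fun J : {set T} => #|J|)).
  by rewrite /indep_in subsetT hI.
- move=> x y hx hy; rewrite /maxn; by case: ifP.
- move=> B /andP [sBS iB]; rewrite -disjBI //.
  apply: (@leq_bigmax_cond _ (fun J : {set T} => indep_in e [set: T] J) (fun J : {set T} => #|J|)).
  by rewrite /indep_in subsetT indepU.
Qed.

Lemma maxU (A : {set T}) : maximal_indep_in e S A -> maximal_indep_in e [set: T] (A :|: I).
Proof.
move=> /andP [/andP [sAS iA] /forallP mA].
rewrite /maximal_indep_in /indep_in subsetT indepU //=.
apply/forallP => J; apply/implyP => /properP [sJ [v vJ vn]].
apply/negP => /andP [_ iJ].
rewrite in_setU negb_or in vn; case/andP: vn => vA vI.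
case vS: (v \in S).
- have := mA (v |: A); rewrite properUr; last first.
    by rewrite sub1set.
  rewrite /= /indep_in => /negP; apply; apply/andP; split.
    by rewrite subUset sub1set vS sAS.
  apply: (@indep_sub _ J); last exact: iJ; rewrite subUset sub1set vJ /=.
  exact: subset_trans (subsetUl A I) sJ.
- move/negbT: vS; rewrite /S in_setC negbK /closed_nbhd in_setU (negbTE vI) /= inE.
  move=> /exists_inP [x xI exv].
  have xJ : x \in J by apply: (subsetP sJ); rewrite in_setU xI orbT.
  by move: (forall_inP (forall_inP iJ x xJ) v vJ); rewrite exv.
Qed.

Lemma imin_ineq : imin_in e [set: T] <= imin_in e S + #|I|.
Proof.
rewrite addnC -leq_subLR /imin_in.
apply: (big_ind (fun x => \big[minn/#|T|]_(J : {set T} | maximal_indep_in e [set: T] J) #|J| - #|I| <= x)).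
- apply: leq_trans (leq_subr _ _) _.
  apply: (big_ind (fun x => x <= #|T|)) => //.
  + by move=> x y hx _; rewrite geq_min hx.
  + by move=> *; apply: max_card.
- by move=> x y hx hy; rewrite leq_min hx hy.
- move=> A mA; rewrite leq_subLR addnC -disjBI; last first.
    by case/andP: mA => /andP [].
  by apply: (@bigminn_le _ (fun J : {set T} => maximal_indep_in e [set: T] J) (fun J : {set T} => #|J|)); apply: maxU.
Qed.
End Helpers.

Local Open Scope ring_scope.

Theorem lemma4 (T : finType) (e : rel T)
  (e_sym : symmetric e) (e_irr : irreflexive e)
  (I : {set T}) (hI : independent e I) :
  mu_alpha_in e (~: closed_nbhd e I) <= mu_alpha_in e [set: T].
Proof.
have h1 := @alpha_ineq T e e_sym I hI.
have h2 := @imin_ineq T e e_sym I hI.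
rewrite /mu_alpha_in.
set aS := alpha_in _ _ in h1 *; set aG := alpha_in _ _ in h1 *.
set iS := imin_in _ _ in h2 *; set iG := imin_in _ _ in h2 *.
rewrite lerBlDr addrAC lerBrDr -!PoszD lez_nat.
rewrite -(leq_add2r #|I|) -addnA [(iS + _)%N]addnC addnA.
rewrite -[X in (_ <= X)%N]addnA; exact: leq_add h1 h2.
Qed.
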